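(* Let $H_A,H_B$ be complex Hilbert spaces of dimensions $d_A,d_B$. Let $\Pi_{A1},\dots,\Pi_{A\mathfrak a}$ be orthogonal projectors on $H_A$ with $\Pi_{Aa}\Pi_{Ac}=\delta_{ac}\Pi_{Aa}$ and $\sum_a\Pi_{Aa}=\mathbf 1_A$, and $\Pi_{B1},\dots,\Pi_{B\mathfrak b}$ orthogonal projectors on $H_B$ with $\Pi_{Bb}\Pi_{Bd}=\delta_{bd}\Pi_{Bb}$ and $\sum_b\Pi_{Bb}=\mathbf 1_B$. For a unit vector $\ket s\in H_A\otimes H_B$ let $p_{ab}=\bra s(\Pi_{Aa}\otimes\Pi_{Bb})\ket s$ and $\mathcal R_{ab}=\mathrm{rank}(\ket s)-\mathrm{rank}[(\Pi_{Aa}\otimes\Pi_{Bb})\ket s]$. Then $\sum_{a,b}p_{ab}\mathcal R_{ab}\le (d_A+d_B)-\sum_{a,b}p_{ab}\,[\mathrm{Tr}(\Pi_{Aa})+\mathrm{Tr}(\Pi_{Bb})].$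
   Context: The rank of a vector $\ket s\in H_A\otimes H_B$ is its Schmidt rank: the least $n$ such that $\ket s=\sum_{i=1}^n\ket{a_i}\otimes\ket{b_i}$ with $\ket{a_i}\in H_A,\ket{b_i}\in H_B$; the zero vector has rank $0$. *)

(* Defs.v *)
(* H_A = C^dA, H_B = C^dB (C = algC); a vector of
   H_A (x) H_B is represented as a dA x dB matrix s, with
   |a> (x) |b>  represented by  a *m b^T  (a, b column vectors), and
   (X (x) Y)|s>  represented by  X *m s *m Y^T. *)
From HB Require Import structures.
From mathcomp Require Import all_boot all_order all_algebra all_field.
Set Implicit Arguments. Unset Strict Implicit. Unset Printing Implicit Defensive.
Import Order.TTheory GRing.Theory Num.Theory.
Local Open Scope ring_scope.

Definition tens (dA dB : nat) (a : 'cV[algC]_dA) (b : 'cV[algC]_dB)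
  : 'M[algC]_(dA, dB) := a *m b^T.

Definition tens_op (dA dB : nat) (X : 'M[algC]_dA) (Y : 'M[algC]_dB)
  (s : 'M[algC]_(dA, dB)) : 'M[algC]_(dA, dB) := X *m s *m Y^T.

Definition tinner (dA dB : nat) (s t : 'M[algC]_(dA, dB)) : algC :=
  \sum_(i < dA) \sum_(j < dB) (s i j)^* * t i j.

Definition decomposable (dA dB : nat) (s : 'M[algC]_(dA, dB)) (n : nat) : Prop :=
  exists (a : 'I_n -> 'cV[algC]_dA) (b : 'I_n -> 'cV[algC]_dB),
    s = \sum_(i < n) tens (a i) (b i).

(* r is the (Schmidt) rank of s: the least n such that s is a sum of n
   elementary tensors (the zero vector has rank 0, as the empty sum). *)
Definition is_schmidt_rank (dA dB : nat) (s : 'M[algC]_(dA, dB)) (r : nat) : Prop :=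
  decomposable s r /\ forall n, decomposable s n -> (r <= n)%N.

Definition adj (d : nat) (X : 'M[algC]_d) : 'M[algC]_d := (map_mx (fun x : algC => x^*) X)^T.

(* Main.v *)
Require Import Defs.
From HB Require Import structures.
From mathcomp Require Import all_boot all_order all_algebra all_field.
Import Order.TTheory GRing.Theory Num.Theory.
Local Open Scope ring_scope.
From mathcomp Require Import zify ring.
Set Implicit Arguments. Unset Strict Implicit.

Lemma trace_idem (d : nat) (P : 'M[algC]_d) : P *m P = P -> \tr P = (\rank P)%:R.
Proof.
move=> hP.
move: (col_base P) (row_base P) (col_base_full P) (row_base_free P) (mulmx_base P).
move=> C R hC hR hB.
have hRC : R *m C = 1%:M.
  apply: (row_free_inj hR).
  rewrite mul1mx; apply: (row_full_inj hC).
  by rewrite !mulmxA hB -mulmxA hB hP.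
by rewrite -{1}hB mxtrace_mulC hRC mxtrace1.
Qed.

Lemma rank_sum_le (dA dB n : nat) (F : 'I_n -> 'M[algC]_(dA, dB)) :
  (\rank (\sum_(i < n) F i)%R <= \sum_(i < n) \rank (F i))%N.
Proof.
elim: n F => [|n IH] F; first by rewrite !big_ord0 mxrank0.
rewrite !big_ord_recr /=.
by apply: leq_trans (mxrank_add _ _) _; rewrite leq_add2r IH.
Qed.

Lemma schmidt_rank (dA dB : nat) (s : 'M[algC]_(dA, dB)) r :
  is_schmidt_rank s r -> r = \rank s.
Proof.
case=> [[a [b ->]] hmin].
apply/eqP; rewrite eqn_leq; apply/andP; split; last first.
  apply: (leq_trans (@rank_sum_le _ _ _ (fun i => tens (a i) (b i)))) => /=.
  rewrite -[X in (_ <= X)%N]card_ord -sum1_card.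
  apply: leq_sum => i _; apply: leq_trans (mxrankM_maxl _ _) _.
  exact: rank_leq_col.
set S := \sum_(i < r) _.
apply: hmin.
exists (fun i => col i (col_base S)), (fun i => (row i (row_base S))^T).
apply: (etrans (esym (mulmx_base S))); apply/matrixP => x y.
rewrite !mxE summxE; apply: eq_bigr => i _.
by rewrite /tens trmxK !mxE big_ord1 !mxE.
Qed.
Definition madj (m n : nat) (N : 'M[algC]_(m, n)) : 'M[algC]_(n, m) :=
  (map_mx (@Num.conj _) N)^T.

Lemma madjM (m n p : nat) (A : 'M[algC]_(m, n)) (B : 'M[algC]_(n, p)) :
  madj (A *m B) = madj B *m madj A.
Proof. by rewrite /madj map_mxM trmx_mul. Qed.

Lemma madjK (m n : nat) (A : 'M[algC]_(m, n)) : madj (madj A) = A.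
Proof.
by apply/matrixP => i j; rewrite !mxE conjCK.
Qed.

Lemma madj_tr (m : nat) (A : 'M[algC]_m) : adj A = A -> madj A^T = A^T.
Proof.
move=> h; rewrite /madj map_trmx trmxK.
have -> : map_mx (@Num.conj _) A = (adj A)^T by rewrite /adj trmxK.
by rewrite h.
Qed.

Lemma tinnerE (dA dB : nat) (u v : 'M[algC]_(dA, dB)) :
  tinner u v = \tr (madj u *m v).
Proof.
rewrite /tinner /mxtrace exchange_big; apply: eq_bigr => j _.
by rewrite !mxE; apply: eq_bigr => i _; rewrite !mxE.
Qed.

Lemma tinner_mull (dA dB : nat) (u v : 'M[algC]_(dA, dB)) (M : 'M[algC]_dA) :
  tinner u (M *m v) = tinner (madj M *m u) v.
Proof. by rewrite !tinnerE madjM madjK mulmxA. Qed.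

Lemma tinner_mulr (dA dB : nat) (u v : 'M[algC]_(dA, dB)) (N : 'M[algC]_dB) :
  tinner u (v *m N) = tinner (u *m madj N) v.
Proof. by rewrite !tinnerE madjM madjK mulmxA mxtrace_mulC mulmxA. Qed.

Lemma tinner_ge0 (dA dB : nat) (u : 'M[algC]_(dA, dB)) : 0 <= tinner u u.
Proof.
apply: sumr_ge0 => i _; apply: sumr_ge0 => j _.
by rewrite mulrC mul_conjC_ge0.
Qed.

Lemma tinner_sumr (dA dB : nat) (u : 'M[algC]_(dA, dB)) I (r : seq I) (F : I -> 'M[algC]_(dA, dB)) :
  tinner u (\sum_(i <- r) F i) = \sum_(i <- r) tinner u (F i).
Proof.
rewrite tinnerE mulmx_sumr raddf_sum; apply: eq_bigr => i _.
by rewrite tinnerE.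
Qed.

Lemma p_eq (dA dB : nat) (X : 'M[algC]_dA) (Y : 'M[algC]_dB) (s : 'M[algC]_(dA, dB)) :
  adj X = X -> X *m X = X -> adj Y = Y -> Y *m Y = Y ->
  tinner s (tens_op X Y s) = tinner (tens_op X Y s) (tens_op X Y s).
Proof.
move=> hXh hXo hYh hYo; rewrite /tens_op.
have hXa : madj X = X by exact: hXh.
have hYT : Y^T *m Y^T = Y^T by rewrite -trmx_mul hYo.
have E : X *m s *m Y^T = X *m (X *m s *m Y^T *m Y^T).
  by rewrite -!mulmxA hYT !mulmxA hXo.
by rewrite {1}E tinner_mull tinner_mulr hXa madj_tr.
Qed.

Lemma rank_ineq (dA dB : nat) (X : 'M[algC]_dA) (Y : 'M[algC]_dB) (s : 'M[algC]_(dA, dB)) :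
  (\rank s + \rank X + \rank Y <= \rank (tens_op X Y s) + dA + dB)%N.
Proof.
have h1 := mxrank_mul_min X s.
have h2 := mxrank_mul_min (X *m s) Y^T.
rewrite mxrank_tr in h2; rewrite /tens_op; move: h1 h2.
set u := \rank (X *m s *m Y^T); set v := \rank (X *m s); lia.
Qed.

Theorem mainTheorem11 (dA dB na nb : nat)
  (PA : 'I_na -> 'M[algC]_dA) (PB : 'I_nb -> 'M[algC]_dB)
  (hPAh : forall a, adj (PA a) = PA a)
  (hPAo : forall a c, PA a *m PA c = if a == c then PA a else 0)
  (hPA1 : \sum_(a < na) PA a = 1%:M)
  (hPBh : forall b, adj (PB b) = PB b)
  (hPBo : forall b d, PB b *m PB d = if b == d then PB b else 0)
  (hPB1 : \sum_(b < nb) PB b = 1%:M)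
  (s : 'M[algC]_(dA, dB)) (hs : tinner s s = 1)
  (r : nat) (hr : is_schmidt_rank s r)
  (rab : 'I_na -> 'I_nb -> nat)
  (hrab : forall a b, is_schmidt_rank (tens_op (PA a) (PB b) s) (rab a b)) :
  let p a b := tinner s (tens_op (PA a) (PB b) s) in
  \sum_(a < na) \sum_(b < nb) p a b * ((r%:R : algC) - (rab a b)%:R)
    <= (dA + dB)%:R
       - \sum_(a < na) \sum_(b < nb) p a b * (\tr (PA a) + \tr (PB b)).
Proof.
cbv zeta.
pose p a b := tinner s (tens_op (PA a) (PB b) s).
change (\sum_(a < na) \sum_(b < nb) p a b * ((r%:R : algC) - (rab a b)%:R)
    <= (dA + dB)%:R
       - \sum_(a < na) \sum_(b < nb) p a b * (\tr (PA a) + \tr (PB b))).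
have hAi a : PA a *m PA a = PA a by rewrite hPAo eqxx.
have hBi b : PB b *m PB b = PB b by rewrite hPBo eqxx.
have hp0 a b : 0 <= p a b.
  by rewrite /p p_eq // tinner_ge0.
have hsum : \sum_(a < na) \sum_(b < nb) p a b = 1.
  rewrite -hs /p; under eq_bigr do rewrite -tinner_sumr.
  rewrite -tinner_sumr; congr tinner.
  rewrite /tens_op.
  under eq_bigr do rewrite -mulmx_sumr -linear_sum /= hPB1 trmx1 mulmx1.
  by rewrite -mulmx_suml hPA1 mul1mx.
have hpt a b : (r%:R - (rab a b)%:R : algC) <= (dA + dB)%:R - (\tr (PA a) + \tr (PB b)).
  rewrite (trace_idem (hAi a)) (trace_idem (hBi b)).
  rewrite (schmidt_rank hr) (schmidt_rank (hrab a b)).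
  have h := rank_ineq (PA a) (PB b) s.
  rewrite -subr_ge0.
  have -> : (dA + dB)%:R - ((\rank (PA a))%:R + (\rank (PB b))%:R) -
     ((\rank s)%:R - (\rank (tens_op (PA a) (PB b) s))%:R) =
     ((\rank (tens_op (PA a) (PB b) s) + dA + dB) - (\rank s + \rank (PA a) + \rank (PB b)))%N%:R :> algC.
    rewrite natrB // !natrD; ring.
  exact: ler0n.
have E : (dA + dB)%:R = \sum_(a < na) \sum_(b < nb) p a b * (dA + dB)%:R :> algC.
  under eq_bigr do rewrite -mulr_suml.
  by rewrite -mulr_suml hsum mul1r.
rewrite {1}E -sumrB.
apply: ler_sum => a _; rewrite -sumrB.
apply: ler_sum => b _; rewrite -mulrBr.
by apply: ler_wpM2l.
Qed.
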